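(* Let $\epsilon>0$ and let $C^*$ be the minimum cost of a valid flow for the generalized network flow instance at time $T$ with all edge capacities $\mu_e$ replaced by $\mu_e/(1+\epsilon)$. Then the final heights produced by the augmenting-path algorithm (run with the original capacities $\mu$) satisfy $\sum_{t=1}^{T}\mathrm{height}_T(s_t)\le\frac{1+\epsilon}{\epsilon}C^*$.
   Context: Generalized network flow instance: digraph $G=(V,E)$ without anti-parallel edges, sources with no incoming edges, sink $\tau$ with no outgoing edges, edge capacities $\mu_e>0$, costs $c_e>0$, gains $\gamma_e>0$; convention: every vertex $v\ne\tau$ has a dummy edge $v\tau$ of infinite capacity, gain $1$ and sufficiently large cost $B$. A valid flow $x\ge0$ satisfies $x_e\le\mu_e$ and $\sum_{e\in\delta^+(v)}x_e-\sum_{e\in\delta^-(v)}\gamma_ex_e=a_v$ for all $v\ne\tau$, where $a_v=1$ for sources and $0$ otherwise; its cost is $\sum_ec_ex_e$. Online: sources $s_1,\dots,s_T$ arrive one at a time with their outgoing edges. Residual graph $G^x$: forward edge $uv$ (capacity $\mu_{uv}-x_{uv}$, cost $c_{uv}$, gain $\gamma_{uv}$) if $x_{uv}<\mu_{uv}$; backward edge $vu$ (capacity $\gamma_{uv}x_{uv}$, cost $0$, gain $1/\gamma_{uv}$) if $x_{uv}>0$. A fractional augmenting path from $s\ne\tau$ in $G^x$ is $f\ge0$ on residual edges with out-minus-gain-weighted-in flow $1$ at $s$ and $0$ at vertices other than $s,\tau$; cost $\sum_ec^x_ef_e$. It is an augmenting path if its support is a path from $s$ to $\tau$, or a cycle through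 $s$ avoiding $\tau$, or a cycle avoiding $s,\tau$ plus a path from $s$ to it internally disjoint from it. Augmenting $x$ by $\theta$ using $f$: $x_{uv}\gets x_{uv}+\theta f_{uv}$ on forward residual edges, $x_{uv}\gets x_{uv}-\theta f_{vu}/\gamma_{uv}$ on backward residual edges $vu$. The augmenting-path algorithm: $x^{(0)}=0$; at time $t$, add $s_t$, start from $x^{(t-1)}$ (zero on new edges), and while the outflow of $s_t$ is less than $1$, augment by the largest feasible $\theta$ (keeping $0\le x_e\le\mu_e$ and outflow of $s_t$ at most $1$) along a cheapest augmenting path from $s_t$ in the current residual graph; the result is $x^{(t)}$. $\mathrm{height}_T(v)$ for $v\ne\tau$ is the minimum cost of an augmenting path from $v$ in $G^{x^{(T)}}$. *)

(* Defs.v *)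
From HB Require Import structures.
From mathcomp Require Import all_boot all_order all_algebra.
From mathcomp Require Import reals constructive_ereal.

Set Implicit Arguments.
Unset Strict Implicit.
Unset Printing Implicit Defensive.

Import Order.TTheory GRing.Theory Num.Theory.
Local Open Scope ring_scope.

Record gf_instance (R : realType) := GFInstance {
  gV : finType;
  gE : finType;
  gsrc : gE -> gV;
  gtgt : gE -> gV;
  gsink : gV;
  gcap : gE -> \bar R;
  gcost : gE -> R;
  ggain : gE -> R }.

Section GenFlow.
Variable R : realType.
Variable G : gf_instance R.
(* the sources s_1, ..., s_T, indexed by 'I_T (s i is s_{i+1}) *)
Variable T : nat.
Variable s : 'I_T -> gV G.

Local Notation V := (@gV R G).
Local Notation E := (@gE R G).
Local Notation src := (@gsrc R G).
Local Notation tgt := (@gtgt R G).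
Local Notation tau := (@gsink R G).
Local Notation mu := (@gcap R G).
Local Notation c := (@gcost R G).
Local Notation gam := (@ggain R G).

Definition instance_ok (B : R) : Prop :=
  [/\ (forall e, src e != tau) /\
      (forall e f, ~~ ((src e == tgt f) && (tgt e == src f))),  (* no anti-parallel edges (nor loops) *)
      [/\ injective s, (forall i, s i != tau) & (forall i e, tgt e != s i)],
      (forall e, (0 < mu e)%E /\ 0 < c e /\ 0 < gam e),
      (forall v, v != tau -> exists e,
          [/\ src e = v, tgt e = tau, mu e = +oo%E, gam e = 1 & c e = B])
    & (forall e, mu e = +oo%E -> [/\ tgt e = tau, gam e = 1 & c e = B])].

Definition is_source (v : V) : bool := [exists i, s i == v].
Definition demand (v : V) : R := if is_source v then 1 else 0.

Definition outflow (x : E -> R) (v : V) : R := \sum_(e | src e == v) x e.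
Definition netout (x : E -> R) (v : V) : R :=
  outflow x v - \sum_(e | tgt e == v) gam e * x e.

Definition valid (cap : E -> \bar R) (x : E -> R) : Prop :=
  [/\ (forall e, 0 <= x e), (forall e, ((x e)%:E <= cap e)%E)
    & (forall v, v != tau -> netout x v = demand v)].

Definition flow_cost (x : E -> R) : R := \sum_e c e * x e.

Definition is_min_cost (cap : E -> \bar R) (C : R) : Prop :=
  (exists y, valid cap y /\ flow_cost y = C) /\
  (forall y, valid cap y -> C <= flow_cost y).

Definition scaled_cap (eps : R) (e : E) : \bar R := (mu e * ((1 + eps)^-1)%:E)%E.

(* residual edges: (e, true) forward, (e, false) backward *)
Definition RE := (E * bool)%type.
Definition rsrc (r : RE) : V := if r.2 then src r.1 else tgt r.1.
Definition rtgt (r : RE) : V := if r.2 then tgt r.1 else src r.1.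
Definition rgain (r : RE) : R := if r.2 then gam r.1 else (gam r.1)^-1.
Definition rcost (r : RE) : R := if r.2 then c r.1 else 0.

(* residual edge r exists in the residual graph of the subgraph induced by
   the active vertices [act] (the graph at the current time) w.r.t. flow x *)
Definition present (act : pred V) (x : E -> R) (r : RE) : bool :=
  act (src r.1) &&
  (if r.2 then ((x r.1)%:E < mu r.1)%E else 0 < x r.1).

Definition rnet (f : RE -> R) (w : V) : R :=
  \sum_(r | rsrc r == w) f r - \sum_(r | rtgt r == w) rgain r * f r.

Definition rcost_of (f : RE -> R) : R := \sum_r rcost r * f r.

Fixpoint walk_from (u : V) (p : seq RE) : bool :=
  if p is r :: p' then (rsrc r == u) && walk_from (rtgt r) p' else true.
Definition endpt (u : V) (p : seq RE) : V := last u (map rtgt p).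
Definition simple_path (u w : V) (p : seq RE) : bool :=
  [&& walk_from u p, uniq (u :: map rtgt p) & endpt u p == w].
Definition cycle_at (u : V) (p : seq RE) : bool :=
  [&& p != [::], walk_from u p, endpt u p == u & uniq (map rtgt p)].

Definition support_is (f : RE -> R) (p : seq RE) : Prop :=
  forall r, (0 < f r) = (r \in p).

Definition aug_shape (v : V) (f : RE -> R) : Prop :=
  (exists p, simple_path v tau p /\ support_is f p)
  \/ (exists p, [/\ cycle_at v p, tau \notin map rtgt p & support_is f p])
  \/ (exists q C w, [/\ cycle_at w C, v \notin map rtgt C /\ tau \notin map rtgt C,
        simple_path v w q,
        (forall u, u \in v :: map rtgt q -> u \in map rtgt C -> u = w)
      & support_is f (q ++ C)]).

Definition aug_path (act : pred V) (x : E -> R) (v : V) (f : RE -> R) : Prop :=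
  [/\ v != tau /\ act v, (forall r, 0 <= f r),
      (forall r, ~~ present act x r -> f r = 0),
      (forall w, w != tau -> rnet f w = ((w == v)%:R : R))
    & aug_shape v f].

Definition cheapest (act : pred V) (x : E -> R) (v : V) (f : RE -> R) : Prop :=
  aug_path act x v f /\ (forall g, aug_path act x v g -> rcost_of f <= rcost_of g).

Definition augment (x : E -> R) (f : RE -> R) (th : R) (e : E) : R :=
  x e + th * f (e, true) - th * f (e, false) / gam e.

Definition feasible_th (v : V) (x : E -> R) (f : RE -> R) (th : R) : Prop :=
  [/\ 0 <= th, (forall e, 0 <= augment x f th e),
      (forall e, ((augment x f th e)%:E <= mu e)%E)
    & outflow (augment x f th) v <= 1].

Definition aug_step (act : pred V) (v : V) (x x' : E -> R) : Prop :=
  exists f th, [/\ cheapest act x v f, feasible_th v x f th,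
                   (forall th', feasible_th v x f th' -> th' <= th)
                 & forall e, x' e = augment x f th e].

(* the while loop processing source v *)
Inductive phase (act : pred V) (v : V) : (E -> R) -> (E -> R) -> Prop :=
| phase_done x : ~ (outflow x v < 1) -> phase act v x x
| phase_step x x' y : outflow x v < 1 -> aug_step act v x x' ->
                      phase act v x' y -> phase act v x y.

(* vertices of the graph at time k: non-sources and s_1..s_k *)
Definition active (k : nat) (v : V) : bool :=
  ~~ is_source v || [exists i : 'I_T, (s i == v) && (i < k)%N].

(* X t = x^(t) is a (terminating) run of the augmenting-path algorithm *)
Definition alg_run (X : nat -> E -> R) : Prop :=
  (forall e, X 0%N e = 0) /\
  (forall t : 'I_T, phase (active t.+1) (s t) (X t) (X t.+1)).

(* h = height of v w.r.t. flow x (full graph at time T) *)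
Definition is_height (x : E -> R) (v : V) (h : R) : Prop :=
  (exists f, aug_path predT x v f /\ rcost_of f = h) /\
  (forall f, aug_path predT x v f -> h <= rcost_of f).

End GenFlow.

(* Main.v *)
Require Import Defs.
From HB Require Import structures.
From mathcomp Require Import all_boot all_order all_algebra.
From mathcomp Require Import reals constructive_ereal.
From mathcomp Require Import classical_sets.
From mathcomp Require Import ring lra zify.
Import Order.TTheory GRing.Theory Num.Theory.
Local Open Scope ring_scope.

Section Walks.
Variable R : realType.
Variable G : gf_instance R.
Local Notation V := (gV G).
Local Notation E := (gE G).
Local Notation tau := (gsink G).
Local Notation RE := (RE G).
Local Notation tg := (@rtgt R G).
Hypothesis Hgam : forall e : E, 0 < ggain e.
Hypothesis Hc : forall e : E, 0 < gcost e.

Lemma rgain_gt0 (r : RE) : 0 < rgain r.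
Proof. by case: r => e [|]; rewrite /rgain /= ?invr_gt0. Qed.

Lemma rcost_ge0 (r : RE) : 0 <= rcost r.
Proof. by case: r => e [|]; rewrite /rcost //= ltW. Qed.

Fixpoint phi (p : seq RE) : RE -> R :=
  if p is r :: p' then fun e => (r == e)%:R + rgain r * phi p' e else fun _ => 0.
Definition Gam (p : seq RE) : R := \prod_(r <- p) rgain r.

Lemma Gam_cons (r : RE) p : Gam (r :: p) = rgain r * Gam p.
Proof. by rewrite /Gam big_cons. Qed.

Lemma Gam_gt0 p : 0 < Gam p.
Proof. by elim: p => [|r p IH]; rewrite ?Gam_cons ?mulr_gt0 ?rgain_gt0 // /Gam big_nil. Qed.

Lemma Gam_cat a b : Gam (a ++ b) = Gam a * Gam b.
Proof. by rewrite /Gam big_cat. Qed.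

Lemma phi_cat (a b : seq RE) e : phi (a ++ b) e = phi a e + Gam a * phi b e.
Proof.
elim: a => [|r a IH] /=; first by rewrite /Gam big_nil mul1r add0r.
by rewrite IH Gam_cons; ring.
Qed.

Lemma phi_ge0 p e : 0 <= phi p e.
Proof.
elim: p => [|r p IH] //=.
by rewrite addr_ge0 ?ler0n // mulr_ge0 // ltW // rgain_gt0.
Qed.

Lemma phi_gt0 p e : (0 < phi p e) = (e \in p).
Proof.
elim: p => [|r p IH] /=; first by rewrite ltxx.
rewrite in_cons eq_sym; case: eqP => [->|_] /=.
  by rewrite ltr_wpDr // mulr_ge0 // ?phi_ge0 // ltW // rgain_gt0.
by rewrite add0r pmulr_rgt0 ?rgain_gt0.
Qed.

Lemma phi_notin p e : e \notin p -> phi p e = 0.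
Proof.
move=> H; apply/eqP; rewrite eq_le phi_ge0 andbT leNgt phi_gt0; exact: H.
Qed.

Lemma rnet_ext (f g : RE -> R) w : (forall e, f e = g e) -> rnet f w = rnet g w.
Proof.
move=> H; rewrite /rnet; congr (_ - _); apply: eq_bigr => r _; by rewrite H.
Qed.

Lemma rnet_lin a b (f g : RE -> R) w :
  rnet (fun e => a * f e + b * g e) w = a * rnet f w + b * rnet g w.
Proof.
rewrite /rnet !big_split /= !mulrBr !mulr_sumr.
have E1 : \sum_(i | rtgt i == w) rgain i * (a * f i + b * g i) =
   \sum_(i | rtgt i == w) a * (rgain i * f i) + \sum_(i | rtgt i == w) b * (rgain i * g i).
  by rewrite -big_split; apply: eq_bigr => i _ /=; ring.
rewrite E1; ring.
Qed.

Lemma cost_lin a b (f g : RE -> R) :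
  rcost_of (fun e => a * f e + b * g e) = a * rcost_of f + b * rcost_of g.
Proof.
rewrite /rcost_of !mulr_sumr -big_split /=; apply: eq_bigr => i _; ring.
Qed.

Lemma sum_delta (P : pred RE) (F : RE -> R) (r : RE) :
  \sum_(r' | P r') (r == r')%:R * F r' = (P r)%:R * F r.
Proof.
rewrite big_mkcond (bigD1 r) //= eqxx mul1r big1 ?addr0.
  by case: (P r); rewrite ?mul1r ?mul0r.
by move=> i /negbTE ne; rewrite eq_sym ne mul0r; case: (P i).
Qed.

Lemma rnet_ind (r : RE) w :
  rnet (fun e => (r == e)%:R) w = (rsrc r == w)%:R - rgain r * (rtgt r == w)%:R.
Proof.
rewrite /rnet.
have := sum_delta (fun r' => rsrc r' == w) (fun _ => 1) r.
under eq_bigr do rewrite mulr1. rewrite mulr1 => ->.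
have := sum_delta (fun r' => rtgt r' == w) (@rgain R G) r.
under eq_bigr do rewrite mulrC. move=> ->; ring.
Qed.

Lemma endpt_cons u (r : RE) (p : seq RE) : endpt u (r :: p) = endpt (rtgt r) p.
Proof. by []. Qed.

Lemma endpt_cat u (a b : seq RE) : endpt u (a ++ b) = endpt (endpt u a) b.
Proof. by rewrite /endpt map_cat last_cat. Qed.

Lemma rnet_phi u (p : seq RE) w : walk_from u p ->
  rnet (phi p) w = (u == w)%:R - Gam p * (endpt u p == w)%:R.
Proof.
elim: p u => [|r p IH] u /=.
  move=> _; rewrite /Gam big_nil mul1r subrr /rnet !big1 ?subr0 //.
  by move=> i _; rewrite mulr0.
case/andP => /eqP Hr Hw.
rewrite (rnet_ext _ (fun e => 1 * (r == e)%:R + rgain r * phi p e)); last by move=> e; rewrite mul1r.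
rewrite rnet_lin.
have HH := rnet_ind r w. rewrite (_ : rnet (fun e => (r == e)%:R) w = (rsrc r == w)%:R - rgain r * (rtgt r == w)%:R); last exact: HH. rewrite (IH (rtgt r)) // Hr Gam_cons endpt_cons.
ring.
Qed.

Lemma cost_phi_cons (r : RE) p : rcost_of (phi (r :: p)) = rcost r + rgain r * rcost_of (phi p).
Proof.
rewrite /=.
have -> : rcost_of (fun e => (r == e)%:R + rgain r * phi p e) =
          rcost_of (fun e => 1 * (r == e)%:R + rgain r * phi p e).
  by rewrite /rcost_of; apply: eq_bigr => i _; rewrite mul1r.
rewrite cost_lin mul1r; congr (_ + _).
rewrite /rcost_of (eq_bigr (fun i => (r == i)%:R * rcost i)); last by move=> i _; rewrite mulrC.
by rewrite (sum_delta xpredT (@rcost R G) r) mul1r.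
Qed.

Lemma cost_phi_ge0 p : 0 <= rcost_of (phi p).
Proof.
by rewrite /rcost_of sumr_ge0 // => i _; rewrite mulr_ge0 ?rcost_ge0 ?phi_ge0.
Qed.

Lemma cost_phi_cat a b : rcost_of (phi (a ++ b)) = rcost_of (phi a) + Gam a * rcost_of (phi b).
Proof.
rewrite /rcost_of mulr_sumr -big_split /=; apply: eq_bigr => i _; rewrite phi_cat; ring.
Qed.


Variable x : E -> R.

Fixpoint pwalk (u : V) (p : seq RE) : bool :=
  if p is r :: p' then [&& u != tau, rsrc r == u, present predT x r & pwalk (rtgt r) p']
  else true.

Lemma pwalk_cat u (a b : seq RE) : pwalk u (a ++ b) = pwalk u a && pwalk (endpt u a) b.
Proof.
elim: a u => [|r a IH] u //=.
by rewrite IH endpt_cons !andbA.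
Qed.

Lemma pwalk_walk u (p : seq RE) : pwalk u p -> walk_from u p.
Proof.
elim: p u => [|r p IH] u //= /and4P [_ -> _ H] /=; exact: IH.
Qed.

Lemma pwalk_present u (p : seq RE) r : pwalk u p -> r \in p -> present predT x r.
Proof.
elim: p u => [|r' p IH] u //= /and4P [_ _ Hp H].
rewrite in_cons => /orP [/eqP ->|]; first exact: Hp.
exact: IH H.
Qed.

Lemma pwalk_ne u (p : seq RE) : pwalk u p -> p != [::] -> u != tau.
Proof. by case: p => [|r p] //= /and4P []. Qed.

Lemma pwalk_targets u (p : seq RE) y : pwalk u p -> y \in map tg p ->
  y = endpt u p \/ y != tau.
Proof.
elim: p u => [|r p IH] u //= /and4P [_ _ _ H].
rewrite in_cons => /orP [/eqP ->|Hy]; last by rewrite endpt_cons; exact: IH H Hy.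
case: p IH H => [|r' p] IH H; first by left.
by right; move: H => /= /and4P [].
Qed.

Lemma split_at u (p : seq RE) z : z \in u :: map tg p ->
  exists a b, p = a ++ b /\ endpt u a = z.
Proof.
elim: p u => [|r p IH] u.
  by rewrite inE => /eqP ->; exists [::], [::].
rewrite in_cons => /orP [/eqP ->|]; first by exists [::], (r :: p).
move/IH => [a [b [-> Ha]]]; by exists (r :: a), b.
Qed.

Lemma endpt_rcons u (b : seq RE) r : endpt u (rcons b r) = rtgt r.
Proof. by rewrite /endpt map_rcons last_rcons. Qed.

Lemma endpt_mem u (a : seq RE) : endpt u a \in u :: map tg a.
Proof. exact: mem_last. Qed.

Lemma endpt_mem_ne u (a : seq RE) : a != [::] -> endpt u a \in map tg a.
Proof. by case: a => [|r a] //= _; rewrite /endpt /=; exact: mem_last. Qed.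

Lemma walk_decomp u (p : seq RE) : uniq (u :: map tg p) \/
  exists a b c, [/\ p = a ++ b ++ c, b != [::], endpt (endpt u a) b = endpt u a,
     uniq (u :: map tg a) && uniq (map tg b) &
     forall z, z \in u :: map tg a -> z \in map tg b -> z = endpt u a].
Proof.
elim/last_ind: p => [|p r IH]; first by left.
case: IH => [Hu|[a [b [c [Hp Hb He Hab Hi]]]]]; last first.
  right; exists a, b, (rcons c r); split => //.
  by rewrite Hp -!rcons_cat.
rewrite map_rcons -rcons_cons rcons_uniq Hu andbT.
case: (boolP (rtgt r \in u :: map tg p)) => Hz; last by left.
right; have [a [b' [Hp Ha]]] := split_at _ _ _ Hz.
exists a, (rcons b' r), [::]; split.
- by rewrite cats0 Hp rcons_cat.
- by case: (b').
- by rewrite endpt_rcons Ha.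
- apply/andP; split; first by move: Hu; rewrite Hp map_cat -cat_cons cat_uniq => /andP [].
  move: Hu; rewrite Hp map_cat -cat_cons cat_uniq => /and3P [_ Hd Hb'].
  rewrite map_rcons rcons_uniq Hb' andbT; apply/negP => Hin.
  move/hasP: Hd; apply; exists (rtgt r) => //; rewrite -Ha; exact: endpt_mem.
- move=> z Hz1; rewrite map_rcons mem_rcons in_cons => /orP [/eqP -> //|Hz2].
  move: Hu; rewrite Hp map_cat -cat_cons cat_uniq => /and3P [_ Hd _].
  by exfalso; move/hasP: Hd; apply; exists z.
Qed.


Lemma supp_phi p : support_is (phi p) p.
Proof. by move=> r; rewrite phi_gt0. Qed.

Lemma walk_bound v (H : R) : v != tau ->
  (forall f, aug_path predT x v f -> H <= rcost_of f) ->
  forall p, pwalk v p -> endpt v p = tau -> H <= rcost_of (phi p).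
Proof.
move=> Hv HH p; have [n] := ubnP (size p); elim: n p => // n IH p /ltnSE Hs Hw He.
case: (walk_decomp v p) => [Hu|[a [b [c [Hp Hb Hy /andP [Hau Hbu] Hi]]]]].
  apply: HH; split => //.
  - by move=> r; exact: phi_ge0.
  - move=> r Hr; apply: phi_notin; apply/negP => Hin; move/negP: Hr; apply.
    exact: pwalk_present _ _ _ Hw Hin.
  - move=> w Hw'; rewrite (rnet_phi _ _ _ (pwalk_walk _ _ Hw)) He (_ : (tau == w) = false); last by rewrite eq_sym (negbTE Hw').
    by rewrite mulr0 subr0 eq_sym.
  - left; exists p; split; last exact: supp_phi.
    by rewrite /simple_path (pwalk_walk _ _ Hw) Hu He eqxx.
set y := endpt v a.
move: Hw He; rewrite Hp !pwalk_cat !endpt_cat -/y Hy => /and3P [Hwa Hwb Hwc] He.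
have Hac : H <= rcost_of (phi (a ++ c)).
  apply: IH; last by rewrite endpt_cat.
    move: Hs; rewrite Hp !size_cat; case: (b) Hb => // r0 b0 _ /=; lia.
  by rewrite pwalk_cat Hwa.
have yNt : y != tau by exact: pwalk_ne _ _ Hwb Hb.
rewrite !cost_phi_cat; rewrite cost_phi_cat in Hac.
have ga := Gam_gt0 a; have gb := Gam_gt0 b.
have ca := cost_phi_ge0 a; have cb := cost_phi_ge0 b; have cc := cost_phi_ge0 c.
case: (ltrP (Gam b) 1) => Hgb; last first.
  apply: (le_trans Hac); rewrite lerD2l; apply: ler_wpM2l; first exact: ltW.
  rewrite -[X in X <= _]add0r; apply: lerD => //.
  rewrite -[X in X <= _]mul1r; apply: ler_wpM2r => //.
pose k := Gam a / (1 - Gam b).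
have k0 : 0 < k by rewrite divr_gt0 // subr_gt0.
pose L := fun e => 1 * phi a e + k * phi b e.
have HL : H <= rcost_of L.
  apply: HH; split => //.
  - by move=> r; rewrite /L addr_ge0 // mulr_ge0 ?phi_ge0 // ltW.
  - move=> r Hr; rewrite /L !phi_notin ?mulr0 ?addr0 //.
      apply/negP => Hin; move/negP: Hr; apply.
      by apply: (pwalk_present _ _ _ Hwb Hin).
    apply/negP => Hin; move/negP: Hr; apply.
    by apply: (pwalk_present _ _ _ Hwa Hin).
  - move=> w Hw'; rewrite /L rnet_lin (rnet_phi _ _ _ (pwalk_walk _ _ Hwa)).
    rewrite (rnet_phi _ _ _ (pwalk_walk _ _ Hwb)) Hy -/y eq_sym.
    rewrite /k; field; rewrite subr_eq0; apply/eqP => E1; move: Hgb; rewrite -E1 ltxx.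
    done.
  - have supL : support_is L (a ++ b).
      move=> r; rewrite /L mem_cat -!phi_gt0 mul1r.
      have := phi_ge0 a r; have := phi_ge0 b r.
      case: (ltrP 0 (phi a r)) => Ha Hb0 Ha0.
        by rewrite ltr_wpDr // mulr_ge0 // ltW.
      have -> : phi a r = 0 by apply/eqP; rewrite eq_le Ha Ha0.
      by rewrite add0r pmulr_rgt0.
    case: (eqVneq a [::]) => [Ea|Ena].
      have Eyv : y = v by rewrite /y Ea.
      right; left; exists b; split.
      + by rewrite /cycle_at -Eyv Hb (pwalk_walk _ _ Hwb) Hy eqxx Hbu.
      + apply/negP => Ht; case: (pwalk_targets _ _ _ Hwb Ht) => [Et|]; last by rewrite eqxx.
        by move: yNt; rewrite Et Hy eqxx.
      + by move: supL; rewrite Ea cat0s.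
    right; right; exists a, b, y; split => //.
    + by rewrite /cycle_at Hb (pwalk_walk _ _ Hwb) Hy eqxx Hbu.
    + split.
        apply/negP => Hv'; have Evy := Hi v (mem_head _ _) Hv'.
        move: Hau; rewrite /= => /andP [Hn _]; move/negP: Hn; apply.
        rewrite Evy; exact: endpt_mem_ne.
      apply/negP => Ht; case: (pwalk_targets _ _ _ Hwb Ht) => [Et|]; last by rewrite eqxx.
      by move: yNt; rewrite Et Hy eqxx.
    + by rewrite /simple_path (pwalk_walk _ _ Hwa) Hau eqxx.
have Ecost : rcost_of (phi a) + Gam a * (rcost_of (phi b) + Gam b * rcost_of (phi c)) =
   (1 - Gam b) * rcost_of L + Gam b * (rcost_of (phi a) + Gam a * rcost_of (phi c)).
  rewrite /L cost_lin /k; field; rewrite subr_eq0; apply/eqP => E1; move: Hgb; rewrite -E1 ltxx.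
  done.
rewrite Ecost.
have h1 : (1 - Gam b) * H <= (1 - Gam b) * rcost_of L by apply: ler_wpM2l => //; rewrite subr_ge0 ltW.
have h2 : Gam b * H <= Gam b * (rcost_of (phi a) + Gam a * rcost_of (phi c)) by apply: ler_wpM2l => //; exact: ltW.
have := lerD h1 h2; rewrite -mulrDl subrK mul1r //.
Qed.


Hypothesis Hdummy : forall v, v != tau -> exists e : E,
  [/\ gsrc e = v, gtgt e = tau & gcap e = +oo%E].

Local Open Scope classical_set_scope.
Definition walkset (v : V) : set R :=
  [set z | exists p, [/\ pwalk v p, endpt v p = tau & z = rcost_of (phi p)]].
Definition pot (v : V) : R := inf (walkset v).

Lemma walkset_lb v : lbound (walkset v) 0.
Proof. by move=> z [p [_ _ ->]]; exact: cost_phi_ge0. Qed.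

Lemma walkset_n0 v : walkset v !=set0.
Proof.
case: (eqVneq v tau) => [->|Hv].
  by exists (rcost_of (phi [::])), [::].
have [e [He1 He2 He3]] := Hdummy _ Hv.
exists (rcost_of (phi [:: (e, true)])), [:: (e, true)]; split => //=.
by rewrite Hv /rsrc /= He1 eqxx /present /= He3 ltry.
Qed.

Lemma pot_ge0 v : 0 <= pot v.
Proof. apply: lb_le_inf; [exact: walkset_n0|exact: walkset_lb]. Qed.

Lemma pot_le_walk v p : pwalk v p -> endpt v p = tau -> pot v <= rcost_of (phi p).
Proof.
move=> H1 H2; apply: ge_inf; first by exists 0; exact: walkset_lb.
by exists p.
Qed.

Lemma pot_tau : pot tau = 0.
Proof.
apply/eqP; rewrite eq_le pot_ge0 andbT.
have -> : 0 = rcost_of (phi [::]) by rewrite /rcost_of big1 // => i _; rewrite mulr0.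
exact: pot_le_walk.
Qed.

Lemma pot_dual (r : RE) : present predT x r ->
  pot (rsrc r) <= rcost r + rgain r * pot (rtgt r).
Proof.
move=> Hr; case: (eqVneq (rsrc r) tau) => [->|Hu].
  by rewrite pot_tau addr_ge0 ?rcost_ge0 // mulr_ge0 ?pot_ge0 // ltW // rgain_gt0.
have g0 := rgain_gt0 r.
rewrite -lerBlDl -ler_pdivrMl //.
apply: lb_le_inf; first exact: walkset_n0.
move=> z [p [Hp Hend ->]].
rewrite ler_pdivrMl // lerBlDl -cost_phi_cons.
apply: pot_le_walk => /=; last by [].
by rewrite Hu eqxx Hr Hp.
Qed.

Lemma height_le_pot v H : v != tau ->
  (forall f, aug_path predT x v f -> H <= rcost_of f) -> H <= pot v.
Proof.
move=> Hv HH; apply: lb_le_inf; first exact: walkset_n0.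
move=> z [p [Hp He ->]]; exact: (walk_bound _ _ Hv HH p Hp He).
Qed.


Lemma sum_part (h : RE -> V) (F : V -> RE -> R) :
  \sum_w \sum_(r | h r == w) F w r = \sum_r F (h r) r.
Proof.
rewrite (exchange_big_dep xpredT) //=; apply: eq_bigr => r _.
by rewrite (big_pred1 (h r)) // => w; rewrite /= eq_sym.
Qed.

Lemma weak_dual (g : RE -> R) : (forall r, 0 <= g r) ->
  (forall r, 0 < g r -> present predT x r) ->
  \sum_w pot w * rnet g w <= rcost_of g.
Proof.
move=> g0 gp.
have -> : \sum_w pot w * rnet g w =
   \sum_r g r * (pot (rsrc r) - rgain r * pot (rtgt r)).
  rewrite /rnet.
  under eq_bigr do rewrite mulrBr !mulr_sumr.
  rewrite sumrB (sum_part (@rsrc R G) (fun w r => pot w * g r)).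
  rewrite (sum_part (@rtgt R G) (fun w r => pot w * (rgain r * g r))).
  rewrite -sumrB; apply: eq_bigr => r _; ring.
rewrite /rcost_of; apply: ler_sum => r _.
have := g0 r; rewrite le_eqVlt => /orP [/eqP <-|Hg]; first by rewrite !mul0r mulr0.
rewrite (mulrC (rcost r)); apply: ler_wpM2l; first exact: ltW.
by rewrite lerBlDr; apply: pot_dual; exact: gp.
Qed.

End Walks.

Section Alg.
Variable R : realType.
Variable G : gf_instance R.
Local Notation V := (gV G).
Local Notation E := (gE G).
Local Notation tau := (gsink G).
Local Notation RE := (RE G).
Local Notation src := (@gsrc R G).
Local Notation tgt := (@gtgt R G).
Local Notation gam := (@ggain R G).
Hypothesis Hgam : forall e : E, 0 < gam e.

Lemma sum_ind {I : finType} (P : pred I) (F : I -> R) :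
  \sum_(i | P i) F i = \sum_i (P i)%:R * F i.
Proof. rewrite big_mkcond; apply: eq_bigr => i _; by case: (P i); rewrite ?mul1r ?mul0r. Qed.

Lemma sum_RE (F : RE -> R) : \sum_r F r = \sum_e (F (e, true) + F (e, false)).
Proof.
have H := pair_bigA _ (fun (e : E) (b : bool) => F (e, b)).
transitivity (\sum_(p : E * bool) F (p.1, p.2)); first by apply: eq_bigr; case.
rewrite -H; apply: eq_bigr => e _; by rewrite big_bool.
Qed.

Lemma netoutE (z : E -> R) w :
  netout z w = \sum_e ((src e == w)%:R * z e - (tgt e == w)%:R * (gam e * z e)).
Proof. by rewrite /netout /outflow (sum_ind (fun e => src e == w)) (sum_ind (fun e => tgt e == w)) -sumrB. Qed.

Lemma rnetE (f : RE -> R) w :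
  rnet f w = \sum_e ((src e == w)%:R * f (e, true) + (tgt e == w)%:R * f (e, false)
     - (tgt e == w)%:R * (gam e * f (e, true)) - (src e == w)%:R * ((gam e)^-1 * f (e, false))).
Proof.
rewrite /rnet (sum_ind (fun r => rsrc r == w)) (sum_ind (fun r => rtgt r == w)) !sum_RE /= -sumrB; apply: eq_bigr => e _; rewrite /rgain /=; ring.
Qed.

Lemma netout_augment (x : E -> R) (f : RE -> R) (th : R) (w : V) :
  netout (augment x f th) w = netout x w + th * rnet f w.
Proof.
rewrite !netoutE rnetE mulr_sumr -big_split /=; apply: eq_bigr => e _.
rewrite /augment; have := Hgam e; move: (gam e) => g g0.
field; exact: lt0r_neq0.
Qed.

Lemma netout_lin a b (f g : E -> R) (w : V) :
  netout (fun e => a * f e + b * g e) w = a * netout f w + b * netout g w.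
Proof.
rewrite !netoutE !mulr_sumr -big_split /=; apply: eq_bigr => e _; ring.
Qed.

Definition gflow (D : E -> R) (r : RE) : R :=
  if r.2 then (if 0 <= D r.1 then D r.1 else 0)
  else gam r.1 * (if 0 <= D r.1 then 0 else - D r.1).

Lemma rnet_gflow (D : E -> R) (w : V) : rnet (gflow D) w = netout D w.
Proof.
rewrite rnetE netoutE; apply: eq_bigr => e _; rewrite /gflow /=.
have := Hgam e; move: (gam e) => g g0.
case: (0 <= D e); field; exact: lt0r_neq0.
Qed.

Lemma gflow_ge0 (D : E -> R) (r : RE) : 0 <= gflow D r.
Proof.
rewrite /gflow; case: (r.2); case: (lerP 0 (D r.1)) => H //; rewrite ?mulr0 //.
by rewrite mulr_ge0 ?ltW // oppr_gt0.
Qed.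


Lemma netout_ext (f g : E -> R) (w : V) : (forall e, f e = g e) -> netout f w = netout g w.
Proof. by move=> H; rewrite !netoutE; apply: eq_bigr => e _; rewrite H. Qed.

Lemma outflow_ext (f g : E -> R) (w : V) : (forall e, f e = g e) -> outflow f w = outflow g w.
Proof. by move=> H; rewrite /outflow; apply: eq_bigr => e _; rewrite H. Qed.

Lemma phase_inv act v (x y : E -> R) : phase act v x y -> (forall e, 0 <= x e) ->
  [/\ (forall e, 0 <= y e),
      exists k, forall w, w != tau -> netout y w = netout x w + k * (w == v)%:R,
      ~ (outflow y v < 1) & (y = x \/ outflow y v <= 1)].
Proof.
elim => {x y} [x Hn|x x' y Hlt [f [th [[Haug _] [_ Hnn _ Hout] _ Hx']]] _ IH] Hx0.
  split => //; last by left.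
  by exists 0 => w _; rewrite mul0r addr0.
have Hx'0 : forall e, 0 <= x' e by move=> e; rewrite Hx'.
have [Hy0 [k Hk] Hny Hor] := IH Hx'0.
split => //.
  exists (k + th) => w Hw; rewrite Hk // (netout_ext _ (augment x f th)) // netout_augment.
  case: Haug => _ _ _ Hr _; rewrite Hr //; ring.
right; case: Hor => [->|//].
by rewrite (outflow_ext _ (augment x f th)).
Qed.

Lemma run_inv (T : nat) (s : 'I_T -> V) (X : nat -> E -> R) :
  injective s -> (forall i, s i != tau) -> (forall i e, tgt e != s i) -> alg_run s X ->
  forall n, (n <= T)%N -> (forall e, 0 <= X n e) /\
    (forall w, w != tau -> netout (X n) w = \sum_(i < T | (i < n)%N) (s i == w)%:R).
Proof.
move=> Hinj Hnt Hin [H0 Hph]; elim => [|n IH] HnT.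
  split; first by move=> e; rewrite H0.
  move=> w _; rewrite big1 // netoutE big1 // => e _; by rewrite H0 !mulr0 subrr.
have HnT' : (n <= T)%N by apply: ltnW.
have [IH0 IHn] := IH HnT'.
pose t := Ordinal HnT.
have Hp := Hph t.
have [Hy0 [k Hk] Hny Hor] := phase_inv _ _ _ _ Hp IH0.
have out_net : forall z, outflow z (s t) = netout z (s t).
  move=> z; rewrite /netout big_pred0 ?subr0 // => e; exact: negbTE (Hin t e).
have Hnet0 : netout (X n) (s t) = 0.
  rewrite IHn // big1 // => i Hi; rewrite (_ : (s i == s t) = false) //.
  apply/negbTE; apply/eqP => /Hinj Eq; move: Hi; by rewrite Eq /= ltnn.
have Hout1 : outflow (X n.+1) (s t) = 1.
  case: Hor => [Eq|Hle].
    by exfalso; apply: Hny; rewrite Eq out_net Hnet0 ltr01.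
  apply/eqP; rewrite eq_le Hle /= leNgt; apply/negP; exact: Hny.
have Hk1 : k = 1.
  have := Hk (s t) (Hnt t); rewrite -out_net Hout1 eqxx.
  rewrite (_ : netout (X t) (s t) = 0) //; rewrite mulr1 add0r => ->.
  done.
split => // w Hw; rewrite Hk // Hk1 mul1r IHn //.
rewrite [in RHS](bigD1 t) //= addrC eq_sym; congr (_ + _).
apply: eq_bigl => i; rewrite -val_eqE /= ltnS.
by case: (ltngtP i n).
Qed.

Lemma sum_demand (T : nat) (s : 'I_T -> V) (w : V) : injective s ->
  \sum_(i < T | (i < T)%N) (s i == w)%:R = demand s w :> R.
Proof.
move=> Hinj.
rewrite (eq_bigl xpredT); last by move=> i; rewrite ltn_ord.
rewrite /demand /is_source; case: ifP => [/existsP [i0 /eqP Hi0]|/negbT Hn].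
  rewrite (bigD1 i0) //= Hi0 eqxx big1 ?addr0 // => i Hi; rewrite -Hi0.
  by case: eqP => // /Hinj E; rewrite E eqxx in Hi.
rewrite big1 // => i _; case: eqP => // Ei; exfalso; move/negP: Hn; apply.
by apply/existsP; exists i; apply/eqP.
Qed.

End Alg.

Theorem lemma4 (R : realType) (G : gf_instance R) (T : nat) (s : 'I_T -> gV G)
    (B : R) (eps : R) (Cstar : R) (X : nat -> gE G -> R) (h : 'I_T -> R) :
  instance_ok s B ->
  0 < eps ->
  is_min_cost s (@scaled_cap R G eps) Cstar ->
  alg_run s X ->
  (forall t : 'I_T, is_height (X T) (s t) (h t)) ->
  \sum_(t < T) h t <= (1 + eps) / eps * Cstar.
Proof.
move=> [[Hsrc Hap] [Hinj Hnt Hin] Hpos Hdum Hinf] Heps [[y [[Hy0 Hycap Hynet] Hycost]] _] Hrun Hh.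
have Hgam : forall e : gE G, 0 < ggain e by move=> e; case: (Hpos e) => _ [].
have Hc : forall e : gE G, 0 < gcost e by move=> e; case: (Hpos e) => _ [].
have Hdummy : forall v : gV G, v != gsink G -> exists e : gE G,
    [/\ gsrc e = v, gtgt e = gsink G & gcap e = +oo%E].
  by move=> v /Hdum [e [H1 H2 H3 _ _]]; exists e.
have [Hx0 Hxnet] := @run_inv R G Hgam T s X Hinj Hnt Hin Hrun T (leqnn T).
set x := X T in Hx0 Hxnet Hh *.
have e1 : 0 < 1 + eps by rewrite addr_gt0.
pose D := fun e => y e - x e / (1 + eps).
pose g := gflow R G D.
have Hg0 : forall r, 0 <= g r := @gflow_ge0 R G Hgam D.
have Hgp : forall r, 0 < g r -> present predT x r.
  case=> e [] /=; rewrite /g /gflow /=.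
    case: (lerP 0 (D e)) => HD; last by rewrite ltxx.
    move=> HDp; rewrite /present /=.
    have Hlt : x e / (1 + eps) < y e by rewrite -subr_gt0.
    have := Hycap e; rewrite /scaled_cap.
    case Hm: (gcap e) => [m| |] //=; last first.
      by move: (Hpos e) => [+ _]; rewrite Hm.
    move=> _; exact: ltry.
    rewrite -EFinM lee_fin lte_fin => Hym.
    have ie : 0 < (1 + eps)^-1 by rewrite invr_gt0.
    rewrite -(ltr_pM2r ie).
    exact: lt_le_trans Hlt Hym.
  case: (lerP 0 (D e)) => HD; first by rewrite mulr0 ltxx.
  move=> _; rewrite /present /=.
  have Hlt : y e < x e / (1 + eps) by rewrite -subr_lt0.
  have : 0 < x e / (1 + eps) by apply: le_lt_trans Hlt.
  by rewrite pmulr_lgt0 // invr_gt0.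
have Hrnet : forall w, w != gsink G -> rnet g w = (eps / (1 + eps)) * demand s w.
  move=> w Hw; rewrite (@rnet_gflow R G Hgam).
  rewrite (@netout_ext R G _ (fun e => 1 * y e + (- (1 + eps)^-1) * x e)); last first.
    by move=> e; rewrite /D; ring.
  rewrite netout_lin Hynet // Hxnet // sum_demand //.
  field; rewrite lt0r_neq0 //.
have Hwd := @weak_dual R G Hgam Hc x Hdummy g Hg0 Hgp.
have HL : \sum_w pot R G x w * rnet g w = eps / (1 + eps) * \sum_t pot R G x (s t).
  transitivity (\sum_w pot R G x w * (eps / (1 + eps) * demand s w)).
    apply: eq_bigr => w _; case: (eqVneq w (gsink G)) => [->|Hw].
      by rewrite (@pot_tau R G Hgam Hc x Hdummy) !mul0r.
    by rewrite Hrnet.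
  rewrite mulr_sumr; under eq_bigr do rewrite mulrCA.
  rewrite -!mulr_sumr; congr (_ * _).
  under eq_bigr do rewrite -sum_demand // mulr_sumr.
  rewrite exchange_big /= (eq_bigl xpredT); last by move=> i; rewrite ltn_ord.
  apply: eq_bigr => i _.
  rewrite (bigD1 (s i)) //= eqxx mulr1 big1 ?addr0 // => w Hw.
  by rewrite eq_sym (negbTE Hw) mulr0.
have HR : rcost_of g <= Cstar.
  rewrite -Hycost /rcost_of /flow_cost sum_RE; apply: ler_sum => e _.
  rewrite /g /gflow /rcost /= mul0r addr0; apply: ler_wpM2l; first exact: ltW.
  case: (lerP 0 (D e)) => HD; last exact: Hy0.
  rewrite /D lerBlDr lerDl; apply: divr_ge0 => //; exact: ltW.
have Hhp : forall t, h t <= pot R G x (s t).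
  move=> t; apply: (@height_le_pot R G Hgam Hc x Hdummy (s t) (h t) (Hnt t)).
  by case: (Hh t).
have HS : eps / (1 + eps) * \sum_t pot R G x (s t) <= Cstar.
  by rewrite -HL; apply: le_trans Hwd HR.
apply: (le_trans (ler_sum _ (fun t _ => Hhp t))).
have -> : \sum_t pot R G x (s t) = (1 + eps) / eps * (eps / (1 + eps) * \sum_t pot R G x (s t)).
  field; rewrite !lt0r_neq0 //.
apply: ler_wpM2l => //; apply: divr_ge0; exact: ltW.
Qed.
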